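(* Let $d\geq 1$, let $p_1<p_2<\dots<p_d$ be the first $d$ prime numbers, let $N\geq 1$ be an integer, and let $C>1$ and $\sigma\in\mathbb{R}$. Let $\mathbf{A}_1$ be the $(d+1)\times(d+1)$ real matrix $$\mathbf{A}_1=\begin{bmatrix}\ln p_1 & & & 0\\ & \ddots & & \vdots\\ & & \ln p_d & 0\\ C\ln p_1 & \cdots & C\ln p_d & C\ln N\end{bmatrix}$$ (diagonal entries $\ln p_1,\dots,\ln p_d$ in the first $d$ rows, zeros elsewhere in those rows, last row $(C\ln p_1,\dots,C\ln p_d,C\ln N)$). Let $\mathbf{z}=(z_1,\dots,z_{d+1})\in\mathbb{Z}^{d+1}$ with $z_{d+1}<0$, and put $\gamma=|z_{d+1}|$, $$u=\prod_{1\le i\le d,\ z_i>0}p_i^{z_i},\qquad k=\prod_{1\le i\le d,\ z_i<0}p_i^{-z_i}.$$ If $$\|\mathbf{A}_1\mathbf{z}\|_1\leq 2\ln C+2\sigma\ln p_d-\gamma\ln N,$$ then $|u-kN^{\gamma}|\leq p_d^{\sigma}$.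
   Context: $\ln$ denotes the natural logarithm and $\|\cdot\|_1$ the $\ell^1$ norm on $\mathbb{R}^{d+1}$. Empty products equal $1$. *)

(* Defs.v *)
From HB Require Import structures.
From mathcomp Require Import all_boot all_order all_algebra.
From mathcomp Require Import all_classical all_reals all_analysis.
Set Implicit Arguments. Unset Strict Implicit. Unset Printing Implicit Defensive.
Import Order.TTheory GRing.Theory Num.Theory.
Local Open Scope ring_scope.

(* [is_nth_prime i q] : q is the i-th prime (1-indexed: the 1st prime is 2),
   i.e. q is prime and exactly i-1 primes are smaller than q. *)
Definition is_nth_prime (i q : nat) : bool :=
  prime q && (count prime (iota 0 q) == i.-1)%N.

(* The matrix A_1, indices 0..d (row/column i < d corresponds to p_{i+1};
   index d is the last row/column). p k denotes the k-th prime p_k. *)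
Definition A1 (R : realType) (d : nat) (p : nat -> nat) (C : R) (N : nat)
  : 'M[R]_(d.+1) :=
  \matrix_(i, j)
    (if (i < d)%N then (if i == j then ln (p i.+1)%:R else 0)
     else if (j < d)%N then C * ln (p j.+1)%:R else C * ln N%:R).

Definition l1norm (R : realType) (n : nat) (v : 'cV[R]_n) : R :=
  \sum_(i < n) `|v i 0|.

(* Main.v *)
Require Import Defs.
From HB Require Import structures.
From mathcomp Require Import all_boot all_order all_algebra.
From mathcomp Require Import all_classical all_reals all_analysis.
From mathcomp Require Import ring lra.
Import Order.TTheory GRing.Theory Num.Theory.
Local Open Scope ring_scope.

Section S.
Context {R : realType}.


Lemma ln_le_sub1 (w : R) : 0 < w -> ln w <= w - 1.
Proof.
move=> w0; have := @le_ln1Dx R (w - 1).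
rewrite (addrC 1) subrK; apply; lra.
Qed.

Lemma keyineq (a y : R) : 0 < a -> 0 < y < 1 ->
  ln (2 * a + 1) + a * ln y + ln (1 - y) <= 0.
Proof.
move=> a0 /andP[y0 y1].
have a1 : 0 < a + 1 by lra.
have y0' : 0 < a / (a + 1) by apply: divr_gt0.
have h1 : ln (y / (a / (a+1))) <= y / (a/(a+1)) - 1.
  by apply: ln_le_sub1; apply: divr_gt0.
rewrite ln_div ?posrE // in h1.
have e1 : y / (a / (a + 1)) = y * (a+1) / a.
  by rewrite invf_div mulrA.
rewrite e1 in h1.
have h2 : ln ((1 - y) * (a+1)) <= (1 - y) * (a+1) - 1.
  by apply: ln_le_sub1; apply: mulr_gt0; lra.
rewrite lnM ?posrE // in h2; last by lra.
have h3 : ln ((2 * a + 1) / (a+1)) <= (2 * a + 1) / (a+1) - 1.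
  by apply: ln_le_sub1; apply: divr_gt0; lra.
rewrite ln_div ?posrE // in h3; last by lra.
have h4 : ln (a / (a+1)) <= a / (a+1) - 1.
  by apply: ln_le_sub1; apply: divr_gt0; lra.
rewrite ln_div ?posrE // in h4.
rewrite ln_div ?posrE // in h1.
have E1 : a * (y * (a + 1) / a - 1) = y * (a+1) - a.
  by field; lra.
have E3 : (2 * a + 1) / (a + 1) - 1 = a / (a+1) by field; lra.
have E4 : a * (a / (a + 1) - 1) = - (a / (a+1)) by field; lra.
have E5 : a / (a+1) <= 1 by rewrite ler_pdivrMr //; lra.
have H1 : a * (ln y - (ln a - ln (a + 1))) <= y * (a+1) - a.
  by rewrite -E1; apply: ler_wpM2l; lra.
have H4 : a * (ln a - ln (a + 1)) <= a * (a / (a + 1) - 1).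
  by apply: ler_wpM2l; lra.
rewrite E4 in H4.
rewrite E3 in h3.
rewrite !mulrBr in H1 H4.
lra.
Qed.

Lemma abstract (U V P C : R) : 0 < U -> 0 < V -> 0 < P -> 1 < C ->
  ln U + ln V + C * `|ln U - ln V| <= 2 * ln C + 2 * ln P -> `|U - V| <= P.
Proof.
move=> U0 V0 P0 C1.
wlog VU : U V U0 V0 / V <= U.
  move=> H; case: (leP V U) => [|/ltW] h; first exact: H.
  move=> hyp; rewrite distrC; apply: H => //; rewrite distrC; lra.
move=> hyp.
case: (eqVneq V U) => [->|VnU]; first by rewrite subrr normr0 ltW.
have VlU : V < U by rewrite lt_neqAle VnU.
set y := V / U.
have y0 : 0 < y by apply: divr_gt0.
have y1 : y < 1 by rewrite ltr_pdivrMr // mul1r.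
have eV : V = y * U by rewrite /y divfK // gt_eqF.
clearbody y.
have lny : ln y < 0 by apply: ln_lt0; rewrite y0 y1.
have elnV : ln V = ln y + ln U by rewrite eV lnM ?posrE.
rewrite elnV in hyp.
have eabs : `|ln U - (ln y + ln U)| = - ln y.
  have -> : ln U - (ln y + ln U) = - ln y by ring.
  by rewrite gtr0_norm // oppr_gt0.
rewrite eabs in hyp.
have eUV : `|U - V| = U * (1 - y).
  by rewrite gtr0_norm ?subr_gt0 // eV; ring.
rewrite eUV -ler_ln ?posrE; last by [] ; last by apply: mulr_gt0; lra.
rewrite lnM ?posrE //; last by lra.
have K := @keyineq ((C - 1) / 2) y.
have e2 : 2 * ((C - 1) / 2) + 1 = C by field.
rewrite e2 in K.
have := K ltac:(lra) ltac:(lra).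
nra.
Qed.

Lemma ln_prod (I : finType) (P : pred I) (F : I -> R) :
  (forall i, P i -> 0 < F i) ->
  ln (\prod_(i | P i) F i) = \sum_(i | P i) ln (F i).
Proof.
move=> HF.
suff [] : 0 < \prod_(i | P i) F i /\ ln (\prod_(i | P i) F i) = \sum_(i | P i) ln (F i) by [].
apply: (big_rec2 (fun a b => 0 < a /\ ln a = b)); first by rewrite ln1.
move=> i a b Pi [a0 <-]; split; first by apply: mulr_gt0 => //; apply: HF.
by rewrite lnM ?posrE //; apply: HF.
Qed.

Lemma sum_restr (d : nat) (G : 'I_d.+1 -> R) :
  \sum_(i < d.+1 | (i < d)%N) G i = \sum_(i < d) G (widen_ord (leqnSn d) i).
Proof.
rewrite big_mkcond big_ord_recr /= ltnn addr0.
by apply: eq_bigr => i _; rewrite ltn_ord.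
Qed.
Lemma signsplit (a : R) (x : int) :
  ((if 0 < x then a * `|x%:~R| else 0) + (if x < 0 then a * `|x%:~R| else 0) = a * `|x%:~R| :> R) /\
  ((if 0 < x then a * `|x%:~R| else 0) - (if x < 0 then a * `|x%:~R| else 0) = a * x%:~R :> R).
Proof.
have [h|h|->] := ltgtP x 0.
- rewrite ltr0_norm ?ltrz0 //; split; ring.
- rewrite gtr0_norm ?ltr0z //; split; ring.
- by rewrite /= normr0 mulr0; split; ring.
Qed.
End S.

Theorem theorem1 (R : realType) (d : nat) (p : nat -> nat) (N : nat)
    (C sigma : R) (z : 'I_d.+1 -> int) :
  (1 <= d)%N ->
  (forall i : nat, (1 <= i <= d)%N -> is_nth_prime i (p i)) ->
  (1 <= N)%N ->
  1 < C ->
  z ord_max < 0 ->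
  let gamma : nat := absz (z ord_max) in
  let u : nat := (\prod_(i < d.+1 | (i < d)%N && (0 < z i)%R) p i.+1 ^ absz (z i))%N in
  let k : nat := (\prod_(i < d.+1 | (i < d)%N && (z i < 0)%R) p i.+1 ^ absz (z i))%N in
  l1norm (A1 d p C N *m \col_i ((z i)%:~R : R))
    <= 2 * ln C + 2 * sigma * ln (p d)%:R - gamma%:R * ln N%:R ->
  `|u%:R - k%:R * N%:R ^+ gamma| <= (p d)%:R `^ sigma.
Proof.
move=> d1 Hp N1 C1 zd gamma u k.
have pp : forall i : 'I_d.+1, (i < d)%N -> (0 < (p i.+1)%:R :> R).
  move=> i id; rewrite ltr0n; have /andP[+ _] := Hp i.+1 id.
  by apply: prime_gt0.
have pd : (0 < (p d)%:R :> R).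
  rewrite ltr0n; have /andP[+ _] := Hp d ltac:(by rewrite d1 leqnn).
  by apply: prime_gt0.
have Lge0 : forall i : 'I_d.+1, (i < d)%N -> 0 <= ln (p i.+1)%:R :> R.
  move=> i id; apply: ln_ge0; rewrite ler1n; have /andP[+ _] := Hp i.+1 id.
  by apply: prime_gt0.
pose w := widen_ord (leqnSn d).
pose L := fun i : 'I_d.+1 => ln (p i.+1)%:R : R.
pose Z := fun i : 'I_d.+1 => (z i)%:~R : R.
pose pos := \sum_(i < d) (if 0 < z (w i) then L (w i) * `|Z (w i)| else 0).
pose neg := \sum_(i < d) (if z (w i) < 0 then L (w i) * `|Z (w i)| else 0).
have eabsZ : forall i, ((absz (z i))%:R : R) = `|Z i| by move=> i; rewrite natr_absz intr_norm.
have lnu : ln (u%:R : R) = pos.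
  rewrite /u natr_prod ln_prod; last first.
    move=> i /andP[id _]; rewrite natrX; exact: exprn_gt0 (pp i id).
  rewrite big_mkcondr sum_restr; apply: eq_bigr => i _.
  case: ifP => // _; rewrite natrX lnXn; last by apply: pp; rewrite /= ltn_ord.
  by rewrite -(mulr_natr (ln _)) eabsZ.
have lnk : ln (k%:R : R) = neg.
  rewrite /k natr_prod ln_prod; last first.
    move=> i /andP[id _]; rewrite natrX; exact: exprn_gt0 (pp i id).
  rewrite big_mkcondr sum_restr; apply: eq_bigr => i _.
  case: ifP => // _; rewrite natrX lnXn; last by apply: pp; rewrite /= ltn_ord.
  by rewrite -(mulr_natr (ln _)) eabsZ.
have hl1 : l1norm (A1 d p C N *m \col_i ((z i)%:~R : R))
    = (pos + neg) + C * `|(pos - neg) + Z ord_max * ln N%:R|.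
  rewrite /l1norm big_ord_recr /=; congr (_ + _).
    rewrite /pos /neg -big_split; apply: eq_bigr => i _ /=.
    rewrite mxE (bigD1 (w i)) //= big1 ?addr0 => [|j ji]; last first.
      rewrite eq_sym in ji.
      by rewrite /A1 !mxE /= ltn_ord (negbTE ji) mul0r.
    rewrite /A1 !mxE /= ltn_ord eqxx normrM.
    have h : 0 <= ln (p i.+1)%:R :> R := Lge0 (w i) (ltn_ord i).
    rewrite (ger0_norm h).
    by case: (signsplit (L (w i)) (z (w i))).
  rewrite mxE big_ord_recr /=.
  have -> : \sum_(j < d) A1 d p C N ord_max (widen_ord (leqnSn d) j) *
      (\col_i ((z i)%:~R : R)) (widen_ord (leqnSn d) j) 0 = C * (pos - neg).
    rewrite /pos /neg -sumrB mulr_sumr; apply: eq_bigr => j _.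
    rewrite /A1 !mxE /= ltnn ltn_ord.
    case: (signsplit (L (w j)) (z (w j))) => _ ->.
    by rewrite /L /Z /= mulrA.
  rewrite /A1 !mxE /= ltnn.
  have -> : C * (pos - neg) + C * ln N%:R * (z ord_max)%:~R = C * (pos - neg + Z ord_max * ln N%:R).
    by rewrite /Z; ring.
  by rewrite normrM gtr0_norm //; lra.
move=> hyp; rewrite hl1 in hyp.
have Zmax : Z ord_max = - (gamma%:R).
  by rewrite /Z /gamma pmulrn ltz0_abs // intrN opprK.
have N0 : (0 < N%:R :> R) by rewrite ltr0n.
have U0 : (0 < u%:R :> R).
  rewrite /u natr_prod; apply: prodr_gt0 => i /andP[id _].
  by rewrite natrX; exact: exprn_gt0 (pp i id).
have k0 : (0 < k%:R :> R).
  rewrite /k natr_prod; apply: prodr_gt0 => i /andP[id _].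
  by rewrite natrX; exact: exprn_gt0 (pp i id).
have V0 : 0 < k%:R * N%:R ^+ gamma :> R by apply: mulr_gt0 => //; apply: exprn_gt0.
have lnV : ln (k%:R * N%:R ^+ gamma : R) = neg + gamma%:R * ln N%:R.
  by rewrite lnM ?posrE ?exprn_gt0 // lnk lnXn // mulr_natl.
have P0 : 0 < (p d)%:R `^ sigma :> R by apply: powR_gt0.
apply: (@abstract R _ _ _ C) => //.
rewrite lnu lnV ln_powR.
have -> : pos - (neg + gamma%:R * ln N%:R) = pos - neg + Z ord_max * ln N%:R.
  by rewrite Zmax; ring.
lra.
Qed.
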